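(* Let $n\ge1$. The Zariski closure of the boundary of the cone of $n\times n$ real symmetric copositive matrices (equivalently, of $\partial\mathcal C_{n,2}$ via $f(x)=x^TAx$) is the hypersurface $$\Big\{A=A^T:\ \prod_{\emptyset\ne I\subseteq[n]}\det A(I,I)=0\Big\}.$$
   Context: A real symmetric $n\times n$ matrix $A$ is copositive if $x^TAx\ge0$ for all $x\in\mathbb R^n_+$; $\mathcal C_{n,2}$ denotes the cone of copositive quadratic forms. $A(I,I)$ is the principal submatrix of $A$ with row and column indices in $I\subseteq[n]=\{1,\dots,n\}$. The Zariski closure of a set of symmetric matrices is the smallest complex algebraic variety in the space of complex symmetric matrices containing it. *)

(* Defs.v *)
From HB Require Import structures.
From mathcomp Require Import all_boot all_order all_algebra.
Set Implicit Arguments. Unset Strict Implicit. Unset Printing Implicit Defensive.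
Import Order.TTheory GRing.Theory Num.Theory.
Local Open Scope ring_scope.

Inductive mpoly (C : Type) (n : nat) : Type :=
| MConst : C -> mpoly C n
| MVar : 'I_n -> 'I_n -> mpoly C n
| MAdd : mpoly C n -> mpoly C n -> mpoly C n
| MMul : mpoly C n -> mpoly C n -> mpoly C n.

Fixpoint meval (C : nzRingType) (n : nat) (p : mpoly C n) (A : 'M[C]_n) : C :=
  match p with
  | MConst c => c
  | MVar i j => A i j
  | MAdd p q => meval p A + meval q A
  | MMul p q => meval p A * meval q A
  end.

Definition zariski_closure (C : nzRingType) (n : nat) (S : 'M[C]_n -> Prop)
  (A : 'M[C]_n) : Prop :=
  A^T = A /\ forall p : mpoly C n, (forall B, S B -> meval p B = 0) -> meval p A = 0.

Definition real_sym (C : numClosedFieldType) (n : nat) (A : 'M[C]_n) : Prop :=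
  A^T = A /\ forall i j, A i j \is Num.real.

Definition copositive (C : numClosedFieldType) (n : nat) (A : 'M[C]_n) : Prop :=
  forall x : 'cV[C]_n, (forall i, 0 <= x i 0) -> 0 <= (x^T *m A *m x) 0 0.

Definition in_closure (C : numClosedFieldType) (n : nat) (P : 'M[C]_n -> Prop)
  (A : 'M[C]_n) : Prop :=
  forall e : C, 0 < e -> exists B, real_sym B /\ P B /\ forall i j, `|B i j - A i j| < e.

Definition copos_boundary (C : numClosedFieldType) (n : nat) (A : 'M[C]_n) : Prop :=
  real_sym A /\ in_closure (@copositive C n) A
  /\ in_closure (fun B => ~ copositive B) A.

(* Principal submatrix A(I,I) (indices of I in increasing order). *)
Definition principal (R : Type) (n : nat) (I : {set 'I_n}) (A : 'M[R]_n)
  : 'M[R]_#|I| :=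
  \matrix_(i < #|I|, j < #|I|) A (enum_val i) (enum_val j).

(* Main.v *)
Require Import Defs.
From HB Require Import structures.
From mathcomp Require Import all_boot all_order all_algebra.
From Stdlib Require Import Ring FunctionalExtensionality.
Set Implicit Arguments. Unset Strict Implicit. Unset Printing Implicit Defensive.
Import Order.TTheory GRing.Theory Num.Theory.
Local Open Scope ring_scope.

Section Main.
Variable C : numClosedFieldType.

Definition cadd (x y : C) := x + y.
Definition cmul (x y : C) := x * y.
Definition csub (x y : C) := x - y.
Definition copp (x : C) := - x.
Definition c0 : C := 0.
Definition c1 : C := 1.
Lemma Cring : @ring_theory (GRing.PzSemiRing.sort C) c0 c1 cadd cmul csub copp eq.
Proof. split=> //; rewrite /cadd/cmul/csub/copp/c0/c1; [exact: add0r|exact: addrC|exact: addrA|exact: mul1r|exact: mulrC|exact: mulrA|exact: mulrDl|exact: subrr]. Qed.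
Add Ring Cring : Cring.
Lemma Cring2 : @ring_theory (Algebra.BaseAddMagma.sort C) c0 c1 cadd cmul csub copp eq.
Proof. exact: Cring. Qed.
Add Ring Cring2 : Cring2.
Lemma Cring3 : @ring_theory (Num.ClosedField.sort C) c0 c1 cadd cmul csub copp eq.
Proof. exact: Cring. Qed.
Add Ring Cring3 : Cring3.
Lemma Cring4 : @ring_theory (Algebra.BaseAddUMagma.sort C) c0 c1 cadd cmul csub copp eq.
Proof. exact: Cring. Qed.
Add Ring Cring4 : Cring4.
Lemma Cring5 : @ring_theory (GRing.Zmodule.sort C) c0 c1 cadd cmul csub copp eq.
Proof. exact: Cring. Qed.
Add Ring Cring5 : Cring5.
Lemma foldadd (a b : C) : a + b = cadd a b. Proof. by []. Qed.
Lemma foldmul (a b : C) : a * b = cmul a b. Proof. by []. Qed.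
Lemma foldopp (a : C) : - a = copp a. Proof. by []. Qed.
Lemma fold0 : 0 = c0 :> C. Proof. by []. Qed.
Lemma fold1 : 1 = c1 :> C. Proof. by []. Qed.
Lemma cwrap (a b : C) : cadd c0 a = cadd c0 b -> a = b.
Proof. by rewrite /cadd /c0 !add0r. Qed.
Ltac cring := apply: cwrap; rewrite ?expr2 ?exprS ?expr0 ?mulr2n ?foldadd ?foldmul ?foldopp ?fold0 ?fold1;
  ring.
Section Quad.
Variable n : nat.
Implicit Types (B : 'M[C]_n) (x y : 'I_n -> C).

Definition bf B x y := \sum_i \sum_j x i * B i j * y j.
Definition qf B x := bf B x x.
Definition tot x := \sum_i x i.
Definition nonneg x := forall i, 0 <= x i.
Definition realv x := forall i, x i \is Num.real.
Definition realm B := forall i j, B i j \is Num.real.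
Definition symm B := forall i j, B j i = B i j.

Lemma symmP B : B^T = B -> symm B.
Proof. by move=> h i j; rewrite -{1}h mxE. Qed.

Lemma qfE B x : ((\col_i x i)^T *m B *m \col_i x i) 0 0 = qf B x.
Proof.
rewrite mxE /qf /bf; under eq_bigr do rewrite mxE big_distrl /=.
rewrite exchange_big; apply: eq_bigr => i _; apply: eq_bigr => j _.
by rewrite !mxE.
Qed.

Lemma qfEc B (x : 'cV[C]_n) : (x^T *m B *m x) 0 0 = qf B (fun i => x i 0).
Proof.
rewrite -qfE; congr (_ _ _); congr (_ *m _ *m _); first congr (_^T);
by apply/matrixP => i j; rewrite !mxE (ord1 j).
Qed.

Lemma bf_linl B a b c y : bf B (fun i => a i + c * b i) y = bf B a y + c * bf B b y.
Proof.
rewrite /bf mulr_sumr -big_split; apply: eq_bigr => i _.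
rewrite mulr_sumr -big_split; apply: eq_bigr => j _ /=; cring.
Qed.

Lemma bf_linr B a b c y : bf B y (fun i => a i + c * b i) = bf B y a + c * bf B y b.
Proof.
rewrite /bf mulr_sumr -big_split; apply: eq_bigr => i _.
rewrite mulr_sumr -big_split; apply: eq_bigr => j _ /=; cring.
Qed.

Lemma bf_sym B x y : symm B -> bf B x y = bf B y x.
Proof.
move=> hB; rewrite /bf exchange_big; apply: eq_bigr => i _; apply: eq_bigr => j _.
rewrite hB; cring.
Qed.

Lemma qf_comb B a b c : symm B ->
  qf B (fun i => a i + c * b i) = qf B a + 2 * c * bf B a b + c ^+ 2 * qf B b.
Proof.
move=> hB; rewrite /qf bf_linl !bf_linr (bf_sym a b hB). rewrite ?expr2 ?exprS ?expr0 ?mulr2n ?foldadd ?foldmul ?foldopp ?fold0 ?fold1. cring.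
Qed.

Lemma qf_scale B c x : qf B (fun i => c * x i) = c ^+ 2 * qf B x.
Proof.
rewrite /qf /bf mulr_sumr; apply: eq_bigr => i _; rewrite mulr_sumr.
apply: eq_bigr => j _; cring.
Qed.

Lemma bf_real B x y : realm B -> realv x -> realv y -> bf B x y \is Num.real.
Proof.
move=> hB hx hy; apply: rpred_sum => i _; apply: rpred_sum => j _.
by rewrite !rpredM.
Qed.

Lemma tot_ge0 x : nonneg x -> 0 <= tot x.
Proof. by move=> h; apply: sumr_ge0. Qed.

Lemma tot0 x : nonneg x -> tot x = 0 -> forall i, x i = 0.
Proof. by move=> h h0 i; apply: (psumr_eq0P (P := predT)) => // j _. Qed.

Lemma qf0 B x : (forall i, x i = 0) -> qf B x = 0.
Proof. by move=> h; rewrite /qf /bf big1 // => i _; rewrite big1 // => j _; rewrite h !mul0r. Qed.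

Lemma tot_sq x : tot x ^+ 2 = \sum_i \sum_j x i * x j.
Proof.
rewrite expr2 /tot mulr_suml; apply: eq_bigr => i _; by rewrite mulr_sumr.
Qed.

Lemma perturb B B' e x : realm B -> realm B' -> nonneg x ->
  (forall i j, `|B' i j - B i j| < e) ->
  qf B x - e * tot x ^+ 2 <= qf B' x /\ qf B' x <= qf B x + e * tot x ^+ 2.
Proof.
move=> hB hB' hx he.
have key : forall i j, - (e * (x i * x j)) <= x i * B' i j * x j - x i * B i j * x j
                                            <= e * (x i * x j).
  move=> i j.
  have hr : B' i j - B i j \is Num.real by rewrite rpredB.
  have /andP[h1 h2] : - e <= B' i j - B i j <= e.
    by rewrite -real_ler_norml // ltW.
  have hxx : 0 <= x i * x j by rewrite mulr_ge0.
  have -> : x i * B' i j * x j - x i * B i j * x j = (B' i j - B i j) * (x i * x j) by cring.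
  rewrite -mulNr ler_wpM2r // ler_wpM2r //.
have -> : qf B' x = qf B x + \sum_i \sum_j (x i * B' i j * x j - x i * B i j * x j).
  rewrite /qf /bf -big_split; apply: eq_bigr => i _; rewrite -big_split.
  apply: eq_bigr => j _ /=; cring.
rewrite tot_sq mulr_sumr; split.
- rewrite lerD2l -sumrN; apply: ler_sum => i _; rewrite mulr_sumr -sumrN.
  by apply: ler_sum => j _; case/andP: (key i j).
- rewrite lerD2l; apply: ler_sum => i _; rewrite mulr_sumr.
  by apply: ler_sum => j _; case/andP: (key i j).
Qed.

End Quad.
Lemma combine (T : finType) (Q : T -> C -> Prop) :
  (forall t d d', Q t d -> 0 < d' -> d' <= d -> Q t d') ->
  (forall t, exists d, 0 < d /\ Q t d) -> exists d, 0 < d /\ forall t, Q t d.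
Proof.
move=> mono ex.
suff : forall s : seq T, exists d, 0 < d /\ forall t, t \in s -> Q t d.
  case/(_ (enum T)) => d [d0 hd]; exists d; split => // t; apply: hd; by rewrite mem_enum.
elim=> [|a s [d2 [d20 h2]]]; first by exists 1; split.
case: (ex a) => d1 [d10 h1].
have r1 : d1 \is Num.real by rewrite gtr0_real.
have r2 : d2 \is Num.real by rewrite gtr0_real.
case: (boolP (d1 <= d2)) => hle.
- exists d1; split => // t; rewrite inE => /orP[/eqP->//|ts].
  by apply: (mono _ _ _ (h2 t ts)).
- have hlt : d2 < d1 by rewrite real_ltNge.
  exists d2; split => // t; rewrite inE => /orP[/eqP->|ts]; last exact: h2.
  by apply: (mono _ _ _ h1) => //; rewrite ltW.
Qed.

Lemma exists_min (T : finType) (P : pred T) (f : T -> C) :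
  (forall i, f i \is Num.real) -> (exists i, P i) ->
  exists i, P i /\ forall j, P j -> f i <= f j.
Proof.
move=> hr [i0 hi0].
suff : forall s : seq T, (exists2 i, i \in s & P i) ->
  exists i, P i /\ forall j, j \in s -> P j -> f i <= f j.
  case/(_ (enum T)); first by exists i0; rewrite ?mem_enum.
  move=> i [Pi hi]; exists i; split => // j; apply: hi; by rewrite mem_enum.
elim=> [[i]//|a s IH [i iin Pi]].
case: (boolP (has P s)) => hs.
- case/hasP: hs => k ks Pk; case: IH; first by exists k.
  move=> m [Pm hm].
  case: (boolP (P a)) => Pa.
  + case: (boolP (f a <= f m)) => hle.
    * exists a; split => // j; rewrite inE => /orP[/eqP->//|js Pj].
      by apply: le_trans hle (hm j js Pj).
    * have hlt : f m < f a by rewrite real_ltNge.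
      exists m; split => // j; rewrite inE => /orP[/eqP->|js Pj]; last exact: hm.
      by rewrite ltW.
  + exists m; split => // j; rewrite inE => /orP[/eqP->|js Pj]; last exact: hm.
    by move=> Pa'; rewrite Pa' in Pa.
- have Pa : P a.
    move: iin; rewrite inE => /orP[/eqP<-//|js]; by move/hasPn: hs => /(_ i js); rewrite Pi.
  exists a; split => // j; rewrite inE => /orP[/eqP->//|js Pj].
  by move/hasPn: hs => /(_ j js); rewrite Pj.
Qed.

Lemma det_real k (M : 'M[C]_k) : (forall i j, M i j \is Num.real) -> \det M \is Num.real.
Proof.
move=> h; rewrite /determinant; apply: rpred_sum => s _.
by rewrite rpredM ?rpredX ?rpredN ?rpred1 //; apply: rpred_prod => i _.
Qed.

Lemma invmx_real k (M : 'M[C]_k) : (forall i j, M i j \is Num.real) ->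
  forall i j, invmx M i j \is Num.real.
Proof.
move=> h i j; rewrite /invmx; case: ifP => _; last exact: h.
rewrite mxE rpredM ?rpredV ?det_real //.
rewrite mxE /cofactor rpredM ?rpredX ?rpredN ?rpred1 ?det_real // => a b.
by rewrite !mxE.
Qed.

Section Lift.
Variable n : nat.
Variable S : {set 'I_n}.
Definition liftv (w : 'I_#|S| -> C) : 'I_n -> C :=
  fun l => \sum_k (enum_val k == l)%:R * w k.

Lemma liftv_out w l : l \notin S -> liftv w l = 0.
Proof.
move=> hl; rewrite /liftv big1 // => k _.
case: eqP => [e|]; last by rewrite mul0r.
by move: (enum_valP k); rewrite e (negbTE hl).
Qed.

Lemma liftv_sum (F : 'I_n -> C) w : \sum_l F l * liftv w l = \sum_k F (enum_val k) * w k.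
Proof.
rewrite /liftv; under eq_bigr do rewrite mulr_sumr.
rewrite exchange_big; apply: eq_bigr => k _.
rewrite (bigD1 (enum_val k)) //= eqxx mul1r big1 ?addr0 // => l hl.
by rewrite eq_sym (negbTE hl) mul0r mulr0.
Qed.

Lemma liftv_val w k : liftv w (enum_val k) = w k.
Proof.
rewrite /liftv (bigD1 k) //= eqxx mul1r big1 ?addr0 // => m hm.
case: eqP => [e|]; last by rewrite mul0r.
by move/enum_val_inj: e => e; rewrite e eqxx in hm.
Qed.

Lemma liftv_real w : (forall k, w k \is Num.real) -> forall l, liftv w l \is Num.real.
Proof. move=> h l; apply: rpred_sum => k _; by rewrite rpredM ?rpred_nat. Qed.
End Lift.
Section Unif.
Variable n : nat.
Variable B : 'M[C]_n.
Hypothesis hBr : realm B.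
Hypothesis hBs : symm B.
Hypothesis cop : forall x, nonneg x -> 0 <= qf B x.
Hypothesis minors : forall S : {set 'I_n}, S != set0 -> \det (principal S B) != 0.

Definition supp (S : {set 'I_n}) (x : 'I_n -> C) := forall i, i \notin S -> x i = 0.
Definition GoodH S d := forall x, nonneg x -> supp S x -> d * tot x ^+ 2 <= qf B x.
Definition Good1 S d := forall x, nonneg x -> supp S x -> tot x = 1 -> d <= qf B x.

Lemma bf_scalel (x y : 'I_n -> C) c : bf B (fun i => c * x i) y = c * bf B x y.
Proof.
rewrite /bf mulr_sumr; apply: eq_bigr => i _; rewrite mulr_sumr.
apply: eq_bigr => j _; cring.
Qed.

Lemma tot_comb (a b : 'I_n -> C) c : tot (fun i => a i + c * b i) = tot a + c * tot b.
Proof. by rewrite /tot big_split mulr_sumr. Qed.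

Lemma tot_scale (a : 'I_n -> C) c : tot (fun i => c * a i) = c * tot a.
Proof. by rewrite /tot mulr_sumr. Qed.

Lemma good1H S d : Good1 S d -> GoodH S d.
Proof.
move=> h x hx hs.
have t0 := tot_ge0 hx.
case: (eqVneq (tot x) 0) => [e|ne].
  by rewrite e qf0 ?expr0n ?mulr0 //; exact: tot0.
have tp : 0 < tot x by rewrite lt_def ne.
set y := fun i => (tot x)^-1 * x i.
have hy : nonneg y by move=> i; rewrite /y mulr_ge0 // invr_ge0.
have hsy : supp S y by move=> i hi; rewrite /y hs // mulr0.
have hty : tot y = 1 by rewrite tot_scale mulVf.
have := h y hy hsy hty; rewrite /y qf_scale => hd.
have h2 : 0 <= tot x ^+ 2 by rewrite exprn_ge0.
have := ler_wpM2r h2 hd.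
have -> : (tot x)^-1 ^+ 2 * qf B x * tot x ^+ 2 = ((tot x)^-1 * tot x) ^+ 2 * qf B x by cring.
by rewrite mulVf // expr1n mul1r.
Qed.

Lemma step S d' : S != set0 -> 0 < d' ->
  (forall j, j \in S -> GoodH (S :\ j) d') -> exists d, 0 < d /\ Good1 S d.
Proof.
move=> hS hd' IH.
set M := principal S B.
have hunit : M \in unitmx by rewrite unitmxE unitfE minors.
set u' : 'cV_#|S| := invmx M *m const_mx 1.
have hMu : M *m u' = const_mx 1 by rewrite /u' mulKVmx.
set u := liftv (fun r => u' r 0).
have hu_out : supp S u by move=> i hi; rewrite /u liftv_out.
have hMr : forall i j, M i j \is Num.real by move=> i j; rewrite /M /principal mxE.
have hu_real : realv u.
  apply: liftv_real => r; rewrite /u' mxE; apply: rpred_sum => c _.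
  by rewrite mxE rpredM ?rpred1 ?invmx_real.
have hBu : forall j, j \in S -> \sum_l B j l * u l = 1.
  move=> j hj; rewrite /u liftv_sum.
  have e := enum_rankK_in hj hj.
  set r := enum_rank_in hj j in e.
  transitivity ((M *m u') r 0); last by rewrite hMu mxE.
  rewrite mxE; apply: eq_bigr => k _; congr (_ * _); rewrite /M /principal mxE; by rewrite -{1}e.
have hbf : forall y, supp S y -> bf B u y = tot y.
  move=> y hy; rewrite /bf exchange_big /tot; apply: eq_bigr => j _.
  have -> : \sum_i u i * B i j * y j = (\sum_i B j i * u i) * y j.
    rewrite mulr_suml; apply: eq_bigr => i _; rewrite hBs; cring.
  case: (boolP (j \in S)) => hj; first by rewrite hBu // mul1r.
  by rewrite hy // mulr0.
have hbf' : forall y, supp S y -> bf B y u = tot y.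
  by move=> y hy; rewrite bf_sym // hbf.
set s := tot u.
have sr : s \is Num.real by apply: rpred_sum => i _; exact: hu_real.
have hqfu : qf B u = s by rewrite /qf hbf.
have hu_nz : exists i, u i != 0.
  case/set0Pn: hS => j hj.
  apply/existsP; apply: contraT; rewrite negb_exists => /forallP h0.
  have := hBu j hj; rewrite big1 => [|l _]; first by move/eqP; rewrite eq_sym oner_eq0.
  by have := h0 l; rewrite negbK => /eqP ->; rewrite mulr0.
case: (boolP (0 < s)) => hs.
-
  have sinv0 : 0 < s^-1 by rewrite invr_gt0.
  set dl := if d' <= s^-1 then d' else s^-1.
  have rd' : d' \is Num.real by rewrite gtr0_real.
  have rsi : s^-1 \is Num.real by rewrite gtr0_real.
  have [dl0 [dl1 dl2]] : 0 < dl /\ dl <= d' /\ dl <= s^-1.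
    rewrite /dl; case: ifP => h; first by rewrite lexx.
    have : s^-1 < d' by rewrite real_ltNge // h.
    by move=> hl; rewrite lexx ltW.
  exists dl; split => // x hx hsx htx.
  set c := fun i => s^-1 * u i.
  set z := fun i => x i + (-1) * c i.
  have hc_out : supp S c by move=> i hi; rewrite /c hu_out // mulr0.
  have hz_out : supp S z by move=> i hi; rewrite /z hc_out // hsx // mulr0 addr0.
  have hx_real : realv x by move=> i; rewrite ger0_real.
  have hc_real : realv c by move=> i; rewrite /c rpredM.
  have hz_real : realv z by move=> i; rewrite /z rpredD ?rpredM ?rpredN ?rpred1.
  have hxcz : x = (fun i => c i + 1 * z i).
    by apply: functional_extensionality => i; rewrite /z /c; cring.
  have htc : tot c = 1 by rewrite tot_scale mulVf // gt_eqF.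
  have htz : tot z = 0 by rewrite /z tot_comb htx htc; cring.
  have bcz : bf B c z = 0.
    rewrite /c bf_scalel hbf //.
    by rewrite htz mulr0.
  have qfc : qf B c = s^-1.
    rewrite /qf /c bf_scalel hbf; last by exact: hc_out.
    by rewrite htc mulr1.
  have qfp : forall t, qf B (fun i => c i + t * z i) = s^-1 + t ^+ 2 * qf B z.
    by move=> t; rewrite qf_comb // bcz qfc mulr0 addr0.
  have qzr : qf B z \is Num.real by apply: bf_real.
  have hqx : qf B x = s^-1 + qf B z by rewrite {1}hxcz qfp expr1n mul1r.
  case: (real_leP (real0 C) qzr) => hq.
    by rewrite hqx; apply: le_trans dl2 _; rewrite lerDl.
  have hneg : exists i, z i < 0.
    apply/existsP; apply: contraT; rewrite negb_exists => /forallP h0.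
    have hzn : nonneg z by move=> i; have := h0 i; rewrite real_leNgt ?real0 //.
    by have := qf0 B (tot0 hzn htz); move=> e; rewrite e ltxx in hq.
  have frl : forall i, c i * (- z i)^-1 \is Num.real.
    by move=> i; rewrite rpredM ?rpredV ?rpredN.
  case: (exists_min frl hneg) => i0 [hi0 hmin].
  set t := c i0 * (- z i0)^-1.
  have cxz : forall i, c i = x i + (- z i) by move=> i; rewrite /z; cring.
  have f_ge1 : forall i, z i < 0 -> 1 <= c i * (- z i)^-1.
    move=> i hi; have nz : - z i != 0 by rewrite oppr_eq0 lt_eqF.
    rewrite cxz mulrDl mulfV // lerDr mulr_ge0 // invr_ge0 oppr_ge0 ltW //.
  have t1 : 1 <= t by exact: f_ge1.
  have hi0S : i0 \in S.
    by apply: contraT => h; move: hi0; rewrite hz_out // ltxx.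
  set p := fun i => c i + t * z i.
  have hp : nonneg p.
    move=> i; rewrite /p.
    case: (real_leP (real0 C) (hz_real i)) => hzi.
    + rewrite cxz -addrA -mulN1r -mulrDl addrC; apply: addr_ge0 => //.
      by rewrite mulr_ge0 // addrC subr_ge0.
    + have := hmin i hzi; rewrite -/t => hti.
      have nzp : 0 < - z i by rewrite oppr_gt0.
      have := ler_wpM2r (ltW nzp) hti.
      have -> : c i * (- z i)^-1 * - z i = c i * ((- z i)^-1 * - z i) by cring.
      rewrite mulVf ?mulr1 ?gt_eqF // => h.
      have -> : c i + t * z i = c i - t * (- z i) by cring.
      by rewrite subr_ge0.
  have hp0 : p i0 = 0.
    have nz : - z i0 != 0 by rewrite oppr_eq0 lt_eqF.
    rewrite /p /t.
    have -> : c i0 + c i0 * (- z i0)^-1 * z i0 = c i0 * (1 - (- z i0)^-1 * (- z i0)) by cring.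
    by rewrite mulVf // subrr mulr0.
  have hps : supp (S :\ i0) p.
    move=> i; rewrite in_setD1 negb_and negbK => /orP[/eqP->//|hi].
    by rewrite /p hc_out // hz_out // mulr0 addr0.
  have htp : tot p = 1 by rewrite /p tot_comb htc htz mulr0 addr0.
  have := IH i0 hi0S p hp hps; rewrite htp expr1n mulr1 qfp => hdp.
  apply: le_trans dl1 _; apply: le_trans hdp _; rewrite hqx lerD2l.
  have := ler_wnM2r (ltW hq) (exprn_ege1 2 t1); by rewrite mul1r.
-
  have hs' : s <= 0 by rewrite real_leNgt ?real0.
  exists d'; split => // x hx hsx htx.
  have hx_real : realv x by move=> i; rewrite ger0_real.
  case: (boolP [exists i, 0 < u i]) => [/existsP hpos|].
  + have frl : forall i, x i * (u i)^-1 \is Num.real.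
      by move=> i; rewrite rpredM ?rpredV.
    case: (exists_min frl hpos) => i0 [hi0 hmin].
    set t := x i0 * (u i0)^-1.
    have t0 : 0 <= t by rewrite mulr_ge0 // invr_ge0 ltW.
    set y := fun i => x i + (- t) * u i.
    have hy : nonneg y.
      move=> i; rewrite /y.
      case: (real_leP (hu_real i) (real0 C)) => hui.
      * by rewrite addr_ge0 // mulr_le0 // oppr_le0.
      * have := hmin i hui; rewrite -/t => hti.
        have := ler_wpM2r (ltW hui) hti.
        have -> : x i * (u i)^-1 * u i = x i * ((u i)^-1 * u i) by cring.
        rewrite mulVf ?mulr1 ?gt_eqF // => h.
        by rewrite mulNr subr_ge0.
    have hy0 : y i0 = 0.
      rewrite /y /t.
      have -> : x i0 + - (x i0 * (u i0)^-1) * u i0 = x i0 * (1 - (u i0)^-1 * u i0) by cring.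
      by rewrite mulVf ?gt_eqF // subrr mulr0.
    have hi0S : i0 \in S.
      by apply: contraT => h; move: hi0; rewrite hu_out // ltxx.
    have hys : supp (S :\ i0) y.
      move=> i; rewrite in_setD1 negb_and negbK => /orP[/eqP->//|hi].
      by rewrite /y hu_out // hsx // mulr0 addr0.
    have hty : tot y = 1 - t * s by rewrite /y tot_comb htx -/s mulNr.
    have hty1 : 1 <= tot y by rewrite hty lerDl oppr_ge0 mulr_ge0_le0.
    have := IH i0 hi0S y hy hys => hdy.
    have hqy : qf B y = qf B x - 2 * t * 1 + t ^+ 2 * s.
      rewrite /y qf_comb // hbf' // htx hqfu; cring.
    apply: le_trans (ler_peMr (ltW hd') (exprn_ege1 2 hty1)) _.
    apply: le_trans hdy _; rewrite hqy.
    rewrite -addrA gerDl -oppr_ge0 opprD opprK; apply: addr_ge0.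
      by rewrite mulr1 mulr_ge0.
    by rewrite oppr_ge0 mulr_ge0_le0 ?exprn_ge0.
  + rewrite negb_exists => /forallP hneg.
    have hw : nonneg (fun i => (-1) * u i).
      move=> i; have := hneg i; rewrite -real_leNgt ?real0 // => h.
      by rewrite mulN1r oppr_ge0.
    have := cop hw; rewrite qf_scale sqrrN expr1n mul1r hqfu => s0.
    have s00 : s = 0 by apply/eqP; rewrite eq_le s0 hs'.
    have htw : tot (fun i => (-1) * u i) = 0 by rewrite tot_scale -/s s00 mulr0.
    case: hu_nz => i; have := tot0 hw htw i.
    by rewrite mulN1r => /eqP; rewrite oppr_eq0 => ->.
Qed.

Lemma goodH_mono S d d' : GoodH S d -> 0 < d' -> d' <= d -> GoodH S d'.
Proof.
move=> h _ hle x hx hs; apply: le_trans (h x hx hs).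
by apply: ler_wpM2r => //; rewrite exprn_ge0 // tot_ge0.
Qed.

Lemma claim k : forall S : {set 'I_n}, (#|S| <= k)%N -> exists d, 0 < d /\ GoodH S d.
Proof.
elim: k => [|k IH] S hS.
  rewrite leqn0 in hS; have -> := cards0_eq (eqP hS).
  exists 1; split => // x hx hs.
  have h0 : forall i, x i = 0 by move=> i; apply: hs; rewrite in_set0.
  by rewrite qf0 // /tot big1 // expr0n mulr0.
case: (leqP #|S| k) => hk; first exact: IH.
have hSk : #|S| = k.+1 by apply/eqP; rewrite eqn_leq hS hk.
have hS0 : S != set0 by rewrite -card_gt0 hSk.
have [d' [hd' hIH]] : exists d, 0 < d /\ forall j, j \in S -> GoodH (S :\ j) d.
  apply: (combine (Q := fun j d => j \in S -> GoodH (S :\ j) d)).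
    by move=> t d d'' h hp hle hj; apply: goodH_mono (h hj) hp hle.
  move=> j; case: (boolP (j \in S)) => hj; last by exists 1; split.
  have : (#|S :\ j| <= k)%N.
    by move: hSk; rewrite (cardsD1 j) hj add1n => [[->]].
  case/IH => d [hd hg]; by exists d; split.
case: (step hS0 hd' hIH) => d [hd hg]; exists d; split => //; exact: good1H.
Qed.

Lemma unif : exists d, 0 < d /\ forall x, nonneg x -> d * tot x ^+ 2 <= qf B x.
Proof.
have : (#|[set: 'I_n]| <= n)%N by rewrite cardsT card_ord.
case/claim => d [hd hg]; exists d; split => // x hx; apply: hg => // i.
by rewrite in_setT.
Qed.
End Unif.
Section Fwd.
Variable n : nat.

Definition ispoly (f : 'M[C]_n -> C) := exists p : mpoly C n, forall B, meval p B = f B.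

Lemma ispoly_ext f g : (forall B, f B = g B) -> ispoly f -> ispoly g.
Proof. by move=> e [p hp]; exists p => B; rewrite hp e. Qed.

Lemma ispoly_const c : ispoly (fun _ => c).
Proof. by exists (MConst n c). Qed.

Lemma ispoly_var i j : ispoly (fun B => B i j).
Proof. by exists (MVar C i j). Qed.

Lemma ispolyD f g : ispoly f -> ispoly g -> ispoly (fun B => f B + g B).
Proof. by move=> [p hp] [q hq]; exists (MAdd p q) => B /=; rewrite hp hq. Qed.

Lemma ispolyM f g : ispoly f -> ispoly g -> ispoly (fun B => f B * g B).
Proof. by move=> [p hp] [q hq]; exists (MMul p q) => B /=; rewrite hp hq. Qed.

Lemma ispoly_sum (I : Type) (r : seq I) (P : pred I) (F : I -> 'M[C]_n -> C) :
  (forall i, ispoly (F i)) -> ispoly (fun B => \sum_(i <- r | P i) F i B).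
Proof.
move=> h; elim: r => [|a r IH].
  by apply: ispoly_ext (ispoly_const 0) => B; rewrite big_nil.
case: (boolP (P a)) => Pa.
  by apply: ispoly_ext (ispolyD (h a) IH) => B; rewrite big_cons Pa.
by apply: ispoly_ext IH => B; rewrite big_cons (negbTE Pa).
Qed.

Lemma ispoly_prod (I : Type) (r : seq I) (P : pred I) (F : I -> 'M[C]_n -> C) :
  (forall i, ispoly (F i)) -> ispoly (fun B => \prod_(i <- r | P i) F i B).
Proof.
move=> h; elim: r => [|a r IH].
  by apply: ispoly_ext (ispoly_const 1) => B; rewrite big_nil.
case: (boolP (P a)) => Pa.
  by apply: ispoly_ext (ispolyM (h a) IH) => B; rewrite big_cons Pa.
by apply: ispoly_ext IH => B; rewrite big_cons (negbTE Pa).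
Qed.

Lemma ispoly_det k (g : 'I_k -> 'I_n) :
  ispoly (fun B => \det (\matrix_(i, j) B (g i) (g j))).
Proof.
unfold determinant.
apply: ispoly_sum => s.
apply: ispolyM; first exact: ispoly_const.
apply: ispoly_prod => i.
apply: ispoly_ext (ispoly_var (g i) (g (perm.fun_of_perm.body s i))) => B; by rewrite mxE.
Qed.

Lemma ispoly_minors :
  ispoly (fun B => \prod_(I : {set 'I_n} | I != set0) \det (principal I B)).
Proof. apply: ispoly_prod => I; exact: ispoly_det. Qed.

Lemma boundary_minor (B : 'M[C]_n) : copos_boundary B ->
  \prod_(I : {set 'I_n} | I != set0) \det (principal I B) = 0.
Proof.
case=> [[hBt hBr] [hcl hncl]].
have hBs := symmP hBt.
have hBr' : realm B by [].
have cop : forall x, nonneg x -> 0 <= qf B x.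
  move=> x hx; have hxr : realv x by move=> i; rewrite ger0_real.
  have qr : qf B x \is Num.real by apply: bf_real.
  case: (real_leP (real0 C) qr) => // hq.
  have t0 := tot_ge0 hx.
  case: (eqVneq (tot x) 0) => [e|ne].
    by rewrite qf0 ?ltxx in hq => //; exact: tot0.
  have tp : 0 < tot x by rewrite lt_def ne.
  have t2 : 0 < tot x ^+ 2 by rewrite exprn_gt0.
  set q := qf B x in hq qr *.
  set e := - q * ((tot x ^+ 2)^-1 * 2^-1).
  have he : 0 < e by rewrite mulr_gt0 ?oppr_gt0 // mulr_gt0 // invr_gt0.
  case: (hcl e he) => B' [[hB't hB'r] [hcop hclose]].
  have := perturb hBr' hB'r hx hclose; case=> _ h.
  have h0 : 0 <= qf B' x by rewrite -qfE; apply: hcop => i; rewrite mxE.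
  have h2 : (2:C)^-1 * 2 = 1 by rewrite mulVf // pnatr_eq0.
  have : q + e * tot x ^+ 2 = q * 2^-1.
    rewrite /e.
    have -> : q + - q * ((tot x ^+ 2)^-1 * 2^-1) * tot x ^+ 2
        = q - q * 2^-1 * ((tot x ^+ 2)^-1 * tot x ^+ 2) by cring.
    rewrite mulVf ?gt_eqF // mulr1.
    have -> : q - q * 2^-1 = q * 2^-1 + q * (1 - 2^-1 * 2) by cring.
    by rewrite h2 subrr mulr0 addr0.
  move=> ee; rewrite ee in h.
  have : q * 2^-1 < 0 by rewrite pmulr_llt0 // invr_gt0.
  by move=> hl; have := le_lt_trans (le_trans h0 h) hl; rewrite ltxx.
apply/eqP; apply: contraT => hprod.
have minors : forall S : {set 'I_n}, S != set0 -> \det (principal S B) != 0.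
  move=> S hS; apply: contra hprod => /eqP h.
  by rewrite (bigD1 S) //= h mul0r.
case: (unif hBr' hBs cop minors) => d [hd hg].
case: (hncl d hd) => B' [[hB't hB'r] [hncop hclose]].
suff : False by [].
apply: hncop => x hx; rewrite qfEc.
have hx' : nonneg (fun i => x i 0) by [].
have := perturb hBr' hB'r hx' hclose; case=> h _.
apply: le_trans h; rewrite subr_ge0; exact: hg.
Qed.

Lemma fwd (A : 'M[C]_n) : zariski_closure (@copos_boundary C n) A ->
  A^T = A /\ \prod_(I : {set 'I_n} | I != set0) \det (principal I A) = 0.
Proof.
case=> hA hz; split => //.
case: ispoly_minors => p hp.
rewrite -hp; apply: hz => B hB; rewrite hp; exact: boundary_minor.
Qed.
End Fwd.
Section PSD.
Variable n : nat.
Lemma psd (Q : 'M[C]_n) (w : 'I_n -> C) :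
  (forall l, n%:R <= Q l l) -> (forall l m, 0 <= Q l m) ->
  (forall l m, l != m -> Q l m <= 1) -> realv w -> 0 <= qf Q w.
Proof.
move=> hd h0 h1 hw.
have sq : forall l, 0 <= w l ^+ 2 by move=> l; rewrite -realEsqr.
have key : forall l m, (l == m)%:R * (2 * n%:R * w l ^+ 2) - (w l ^+ 2 + w m ^+ 2)
                       <= 2 * (w l * Q l m * w m).
  move=> l m; case: eqVneq => [<-|ne].
  - rewrite mul1r; apply: le_trans (_ : _ <= 2 * n%:R * w l ^+ 2) _.
      by rewrite gerBl addr_ge0.
    have -> : 2 * (w l * Q l l * w l) = 2 * Q l l * w l ^+ 2 by cring.
    apply: ler_wpM2r => //; apply: ler_wpM2l => //.
  - rewrite mul0r sub0r -subr_ge0 opprK.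
    have -> : 2 * (w l * Q l m * w m) + (w l ^+ 2 + w m ^+ 2)
        = Q l m * (w l + w m) ^+ 2 + (1 - Q l m) * (w l ^+ 2 + w m ^+ 2) by cring.
    have hr : w l + w m \is Num.real by rewrite rpredD.
    rewrite addr_ge0 // mulr_ge0 //; first by rewrite -realEsqr.
    by rewrite subr_ge0 h1.
    by rewrite addr_ge0.
have : \sum_l \sum_m ((l == m)%:R * (2 * n%:R * w l ^+ 2) - (w l ^+ 2 + w m ^+ 2))
         <= 2 * qf Q w.
  rewrite /qf /bf mulr_sumr; apply: ler_sum => l _; rewrite mulr_sumr.
  by apply: ler_sum => m _; apply: key.
have -> : \sum_l \sum_m ((l == m)%:R * (2 * n%:R * w l ^+ 2) - (w l ^+ 2 + w m ^+ 2)) = 0.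
  have e1 : forall l, \sum_m ((l == m)%:R * (2 * n%:R * w l ^+ 2) - (w l ^+ 2 + w m ^+ 2))
       = 2 * n%:R * w l ^+ 2 - (w l ^+ 2 * n%:R + \sum_m w m ^+ 2).
    move=> l; rewrite sumrB big_split /= sumr_const card_ord -mulr_natr.
    congr (_ - _); last by rewrite mulr_natr.
    rewrite (bigD1 l) // big1 => [|m hm].
      by rewrite eqxx /= mulr1n mul1r addr0.
    by rewrite eq_sym (negbTE hm) mul0r.
  rewrite (eq_bigr _ (fun l _ => e1 l)) sumrB big_split /= sumr_const card_ord.
  rewrite -mulr_sumr -mulr_suml -mulr_natr -[(\sum_(m < n) w m ^+ 2) *+ n]mulr_natr; cring.
by rewrite pmulr_rge0.
Qed.
End PSD.
Section Ident.
Variable T : finType.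
Definition upd (x : T -> C) (a : T) (t : C) : T -> C :=
  fun b => if b == a then t else x b.

Lemma ident (F : (T -> C) -> C) (f : T -> nat -> C) :
  (forall a, injective (f a)) ->
  (forall x a, exists q : {poly C}, forall t, F (upd x a t) = q.[t]) ->
  (forall x, (forall a, exists k, x a = f a k) -> F x = 0) ->
  forall x, F x = 0.
Proof.
move=> finj hpol hz.
suff H : forall s : seq T, forall x, (forall a, a \notin s -> exists k, x a = f a k) -> F x = 0.
  by move=> x; apply: (H (enum T)) => a; rewrite mem_enum.
elim=> [|a s IH] x hx; first by apply: hz => a; apply: hx.
case: (hpol x a) => q hq.
have q0 : q = 0.
  apply/eqP; apply: contraT => qn.
  have hr : all (root q) [seq f a k | k <- iota 0 (size q)].
    apply/allP => y /mapP [k _ ->]; rewrite /root -hq; apply/eqP; apply: IH => b hb.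
    rewrite /upd; case: eqP => [->|nb]; first by exists k.
    by apply: hx; rewrite inE negb_or hb andbT; apply/eqP.
  have hu : uniq [seq f a k | k <- iota 0 (size q)] by rewrite map_inj_uniq ?iota_uniq.
  by have := max_poly_roots qn hr hu; rewrite size_map size_iota ltnn.
have -> : x = upd x a (x a).
  by apply: functional_extensionality => b; rewrite /upd; case: eqP => [->|].
by rewrite hq q0 horner0.
Qed.
End Ident.

Fixpoint mlift (n : nat) (p : mpoly C n) : mpoly {poly C} n :=
  match p with
  | MConst c => MConst n c%:P
  | MVar i j => MVar {poly C} i j
  | MAdd p q => MAdd (mlift p) (mlift q)
  | MMul p q => MMul (mlift p) (mlift q)
  end.

Lemma mlift_eval n (p : mpoly C n) (M : 'M[{poly C}]_n) t :
  (meval (mlift p) M).[t] = meval p (map_mx (horner_eval t) M).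
Proof.
elim: p => [c|i j|p IHp q IHq|p IHp q IHq] /=.
- by rewrite hornerC.
- by rewrite mxE.
- by rewrite hornerD IHp IHq.
- by rewrite hornerM IHp IHq.
Qed.

Section Param.
Variable n : nat.
Variable I : {set 'I_n}.
Variable i0 : 'I_n.
Hypothesis hi0 : i0 \in I.
Definition PT := ('I_n * 'I_n + 'I_n)%type.

Section Gen.
Variable R : comNzRingType.
Variable x : PT -> R.
Definition Qm : 'M[R]_n := \matrix_(l, m) x (inl (if (l <= m)%N then (l, m) else (m, l))).
Definition vv : 'cV[R]_n := \col_l (if l == i0 then 1 else if l \in I then x (inr l) else 0).
Definition er : 'rV[R]_n := \row_m ((m == i0)%:R).
Definition Km : 'M[R]_n := 1%:M - vv *m er.
Definition Phi : 'M[R]_n :=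
  \matrix_(l, m) if (l \in I) && (m \in I) then (Km^T *m Qm *m Km) l m else Qm l m.
End Gen.

Lemma Phi_map (R S : comNzRingType) (f : {rmorphism R -> S}) (x : PT -> R) :
  map_mx f (Phi x) = Phi (fun a => f (x a)).
Proof.
have hQ : map_mx f (Qm x) = Qm (fun a => f (x a)) by apply/matrixP => l m; rewrite !mxE.
have hv : map_mx f (vv x) = vv (fun a => f (x a)).
  apply/matrixP => l m; rewrite !mxE; case: eqP => _; first by rewrite rmorph1.
  by case: ifP => _ //; rewrite rmorph0.
have he : map_mx f (er R) = er S by apply/matrixP => l m; rewrite !mxE rmorph_nat.
have hK : map_mx f (Km x) = Km (fun a => f (x a)).
  by rewrite /Km map_mxB map_mx1 map_mxM hv he.
have hP : forall (T : comNzRingType) (y : PT -> T) l m, Phi y l m =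
  if (l \in I) && (m \in I) then ((Km y)^T *m Qm y *m Km y) l m else Qm y l m.
  by move=> T y l m; rewrite mxE.
apply/matrixP => l m; rewrite mxE !hP; case: ifP => _; last by rewrite -hQ [RHS]mxE.
transitivity ((map_mx f ((Km x)^T *m Qm x *m Km x)) l m); first by rewrite [RHS]mxE.
by rewrite !map_mxM -map_trmx hK hQ.
Qed.

Definition frange (a : PT) (k : nat) : C :=
  match a with
  | inl (l, m) => if l == m then (n + k)%:R else (k.+1)%:R^-1
  | inr _ => (k.+1)%:R
  end.

Lemma frange_inj a : injective (frange a).
Proof.
case: a => [[l m]|l] k1 k2 /=.
- case: eqP => _.
  + by move/eqP; rewrite eqr_nat eqn_add2l => /eqP.
  + by move/invr_inj/eqP; rewrite eqr_nat eqSS => /eqP.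
- by move/eqP; rewrite eqr_nat eqSS => /eqP.
Qed.

Lemma frange_ge0 a k : 0 <= frange a k.
Proof. by case: a => [[l m]|l] /=; [case: eqP => _; rewrite ?invr_ge0 ler0n|]. Qed.

Lemma Qsym (R : comNzRingType) (x : PT -> R) l m : Qm x m l = Qm x l m.
Proof.
rewrite !mxE; case: (leqP l m) => h1; case: (leqP m l) => h2 //.
- have e : l = m by apply: val_inj; apply/eqP; rewrite eqn_leq h1 h2.
  by rewrite e.
- by have := ltn_trans h1 h2; rewrite ltnn.
Qed.

Definition realmx k1 k2 (A : 'M[C]_(k1, k2)) := forall i j, A i j \is Num.real.

Lemma realmx_mul k1 k2 k3 (A : 'M[C]_(k1, k2)) (B : 'M[C]_(k2, k3)) :
  realmx A -> realmx B -> realmx (A *m B).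
Proof. by move=> hA hB i j; rewrite mxE; apply: rpred_sum => k _; rewrite rpredM. Qed.

Lemma realmx_tr k1 k2 (A : 'M[C]_(k1, k2)) : realmx A -> realmx A^T.
Proof. by move=> h i j; rewrite mxE. Qed.

Section InRange.
Variable x : PT -> C.
Hypothesis hx : forall a, exists k, x a = frange a k.

Lemma x_ge0 a : 0 <= x a.
Proof. by case: (hx a) => k ->; apply: frange_ge0. Qed.

Lemma Q_ge0 l m : 0 <= Qm x l m.
Proof. by rewrite mxE x_ge0. Qed.

Lemma Q_diag l : n%:R <= Qm x l l.
Proof.
rewrite mxE leqnn; case: (hx (inl (l, l))) => k -> /=.
by rewrite eqxx ler_nat leq_addr.
Qed.

Lemma Q_off l m : l != m -> Qm x l m <= 1.
Proof.
move=> ne; rewrite mxE; case: leqP => _.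
- case: (hx (inl (l, m))) => k -> /=; rewrite (negbTE ne).
  by rewrite invf_le1 ?ltr0Sn // ler1n.
- case: (hx (inl (m, l))) => k -> /=; rewrite eq_sym (negbTE ne).
  by rewrite invf_le1 ?ltr0Sn // ler1n.
Qed.

Lemma Q_real : realmx (Qm x).
Proof. by move=> l m; rewrite ger0_real ?Q_ge0. Qed.

Lemma vv_ge0 l : 0 <= vv x l 0.
Proof. by rewrite mxE; case: eqP => _ //; case: ifP => _ //; apply: x_ge0. Qed.

Lemma vv_real : realmx (vv x).
Proof. by move=> l j; rewrite (ord1 j) ger0_real ?vv_ge0. Qed.

Lemma er_real : realmx (er C).
Proof. by move=> i j; rewrite mxE rpred_nat. Qed.

Lemma K_real : realmx (Km x).
Proof.
move=> i j; rewrite mxE rpredD //; first by rewrite mxE rpredMn ?rpred1.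
rewrite mxE rpredN; apply: realmx_mul; [exact: vv_real|exact: er_real].
Qed.

Lemma KQK_real : realmx ((Km x)^T *m Qm x *m Km x).
Proof.
apply: realmx_mul; last exact: K_real.
apply: realmx_mul; [apply: realmx_tr; exact: K_real|exact: Q_real].
Qed.

Lemma Phi_real : realmx (Phi x).
Proof. move=> l m; rewrite mxE; case: ifP => _; [exact: KQK_real|exact: Q_real]. Qed.

Lemma Qtr : (Qm x)^T = Qm x.
Proof. by apply/matrixP => l m; rewrite mxE Qsym. Qed.

Lemma Phi_tr : (Phi x)^T = Phi x.
Proof.
have hT : ((Km x)^T *m Qm x *m Km x)^T = (Km x)^T *m Qm x *m Km x.
  by rewrite !trmx_mul trmxK Qtr mulmxA.
apply/matrixP => l m; rewrite mxE [Phi x m l]mxE [Phi x l m]mxE andbC.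
case: ifP => _; last exact: Qsym.
by rewrite -[in RHS]hT [RHS]mxE.
Qed.

Lemma qf_KQK (z : 'I_n -> C) :
  qf ((Km x)^T *m Qm x *m Km x) z = qf (Qm x) (fun a => (Km x *m \col_l z l) a 0).
Proof.
by rewrite -qfE -qfEc trmx_mul !mulmxA.
Qed.

Lemma Phi_cop (y : 'I_n -> C) : nonneg y -> 0 <= qf (Phi x) y.
Proof.
move=> hy.
set ym := fun l => if l \in I then y l else 0.
have h1 : qf ((Km x)^T *m Qm x *m Km x) ym <= qf (Phi x) y.
  rewrite /qf /bf; apply: ler_sum => l _; apply: ler_sum => m _.
  rewrite /ym [Phi x l m]mxE; case: (boolP (l \in I)) => hl; case: (boolP (m \in I)) => hm //=;
    rewrite ?mul0r ?mulr0 mulr_ge0 ?mulr_ge0 ?Q_ge0 //.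
apply: le_trans h1; rewrite qf_KQK; apply: psd.
- exact: Q_diag.
- exact: Q_ge0.
- exact: Q_off.
- move=> a; apply: (realmx_mul K_real) => i j; rewrite mxE /ym.
  by case: ifP => _; rewrite ?rpred0 // ger0_real.
Qed.

Lemma Kv0 : Km x *m vv x = 0.
Proof.
rewrite /Km mulmxBl mul1mx -mulmxA.
have -> : er C *m vv x = 1%:M.
  apply/matrixP => i j; rewrite (ord1 i) (ord1 j) !mxE.
  rewrite (bigD1 i0) //= big1 => [|m hm]; last by rewrite !mxE (negbTE hm) mul0r.
  by rewrite !mxE eqxx /= mulr1n mul1r addr0.
by rewrite mulmx1 subrr.
Qed.

Lemma Phi_v0 : qf (Phi x) (fun l => vv x l 0) = 0.
Proof.
have hs : forall l, l \notin I -> vv x l 0 = 0.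
  move=> l hl; rewrite mxE; case: eqP => [e|_]; first by rewrite e hi0 in hl.
  by rewrite (negbTE hl).
transitivity (qf ((Km x)^T *m Qm x *m Km x) (fun l => vv x l 0)).
  rewrite /qf /bf; apply: eq_bigr => l _; apply: eq_bigr => m _.
  rewrite [Phi x l m]mxE; case: (boolP (l \in I)) => hl; case: (boolP (m \in I)) => hm //=.
  - by rewrite (hs m hm) !mulr0.
  - by rewrite (hs l hl) !mul0r.
  - by rewrite (hs l hl) !mul0r.
rewrite qf_KQK; apply: qf0 => a.
have -> : (\col_l vv x l 0) = vv x by apply/matrixP => i j; rewrite (ord1 j) mxE.
by rewrite Kv0 mxE.
Qed.
End InRange.

Lemma qf_subI (B : 'M[C]_n) c (y : 'I_n -> C) :
  qf (B - c%:M) y = qf B y - c * \sum_l y l ^+ 2.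
Proof.
rewrite /qf /bf mulr_sumr -sumrB; apply: eq_bigr => i _.
rewrite (bigD1 i) // [in RHS](bigD1 i) //=.
have -> : \sum_(j | j != i) y i * (B - c%:M) i j * y j = \sum_(j | j != i) y i * B i j * y j.
  apply: eq_bigr => j hj; rewrite !mxE eq_sym (negbTE hj) mulr0n subr0 //.
rewrite !mxE eqxx /= mulr1n.
move: (\sum_(j | j != i) y i * B i j * y j) => s1; cring.
Qed.

Lemma Phi_boundary x : (forall a, exists k, x a = frange a k) -> copos_boundary (Phi x).
Proof.
move=> hx.
have hr : real_sym (Phi x) by split; [exact: Phi_tr|exact: Phi_real].
split => //; split.
- move=> e he; exists (Phi x); split => //; split.
    by move=> y hy; rewrite qfEc; apply: Phi_cop.
  by move=> i j; rewrite subrr normr0.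
- move=> e he; set c := e / 2.
  have c0 : 0 < c by rewrite divr_gt0.
  have ce : c < e.
    have : c + c = e by rewrite /c -splitr.
    by move=> <-; rewrite ltrDl.
  have cr : c \is Num.real by rewrite gtr0_real.
  exists (Phi x - c%:M); split; [split|split].
  + by rewrite linearB /= tr_scalar_mx Phi_tr.
  + move=> i j; rewrite mxE rpredD ?Phi_real //.
    by rewrite mxE rpredN mxE rpredMn.
  + move=> hc.
    have := hc (vv x) (vv_ge0 hx); rewrite qfEc qf_subI Phi_v0 // sub0r oppr_ge0.
    have hs : 1 <= \sum_l vv x l 0 ^+ 2.
      rewrite (bigD1 i0) //= [vv x i0 0]mxE eqxx expr1n lerDl sumr_ge0 // => i _.
      by rewrite exprn_ge0 ?vv_ge0.
    rewrite pmulr_rle0 // => hle.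
    by have := le_trans hs hle; rewrite ler10.
  + move=> i j; rewrite mxE.
    have -> : Phi x i j + (- c%:M) i j - Phi x i j = - c%:M i j.
      by rewrite [X in _ + X - _]mxE addrAC subrr add0r.
    rewrite normrN mxE; case: eqP => _; last by rewrite mulr0n normr0.
    by rewrite mulr1n ger0_norm // ltW.
Qed.

Lemma param_zero (p : mpoly C n) : (forall B, copos_boundary B -> meval p B = 0) ->
  forall x : PT -> C, meval p (Phi x) = 0.
Proof.
move=> hp.
apply: (ident (F := fun x => meval p (Phi x)) (f := frange) frange_inj).
- move=> x a.
  exists (meval (mlift p) (Phi (fun b => if b == a then 'X else (x b)%:P))) => t.
  rewrite mlift_eval Phi_map; congr (meval p (Phi _)).
  apply: functional_extensionality => b; rewrite /upd; case: eqP => _.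
    exact: (esym (hornerX t)).
  exact: (esym (hornerC _ t)).
- by move=> x hx; apply: hp; apply: Phi_boundary.
Qed.
End Param.

Lemma bwd n (A : 'M[C]_n) : A^T = A ->
  \prod_(I : {set 'I_n} | I != set0) \det (principal I A) = 0 ->
  zariski_closure (@copos_boundary C n) A.
Proof.
move=> hA hprod; split => // p hp.
have hAs := symmP hA.
move/eqP: hprod; rewrite prodf_seq_eq0 => /hasP [I _ /andP [hI /eqP hdet]].
set M := principal I A in hdet.
case/det0P: (introT eqP hdet) => r rn0 hrM.
have [k0 hk0] : exists k, r 0 k != 0.
  apply/existsP; apply: contraT; rewrite negb_exists => /forallP h0.
  suff : r = 0 by move=> e; rewrite e eqxx in rn0.
  apply/matrixP => i j; rewrite (ord1 i) mxE; have := h0 j; by rewrite negbK => /eqP.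
set u := liftv (fun k => r 0 k).
set i0 := enum_val k0.
have hi0 : i0 \in I by exact: enum_valP.
have hu0 : u i0 = r 0 k0 by rewrite /u liftv_val.
have hAu : forall j, j \in I -> \sum_l A j l * u l = 0.
  move=> j hj; rewrite /u liftv_sum.
  have e := enum_rankK_in hj hj.
  set jj := enum_rank_in hj j in e.
  transitivity ((r *m M) 0 jj); last by rewrite hrM mxE.
  rewrite mxE; apply: eq_bigr => k _; rewrite /M /principal mxE mulrC; congr (_ * _).
  by rewrite hAs -{1}e.
set v := fun l => (u i0)^-1 * u l.
have hv0 : v i0 = 1 by rewrite /v mulVf // hu0.
have hvI : forall l, l \notin I -> v l = 0 by move=> l hl; rewrite /v /u (liftv_out _ hl) mulr0.
have hAv : forall j, j \in I -> \sum_l A j l * v l = 0.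
  move=> j hj; transitivity ((u i0)^-1 * \sum_l A j l * u l); last by rewrite hAu // mulr0.
  by rewrite mulr_sumr; apply: eq_bigr => l _; rewrite /v; cring.
set x := fun a : PT n => match a with inl (l, m) => A l m | inr l => v l end.
have hQ : Qm x = A.
  apply/matrixP => l m; rewrite mxE /x; case: leqP => _ //; exact: hAs.
have hvv : vv I i0 x = \col_l v l.
  apply/matrixP => l j; rewrite !mxE; case: eqP => [->|_]; first by rewrite hv0.
  by case: ifP => h //; rewrite hvI // h.
have hPhi : Phi I i0 x = A.
  apply/matrixP => l m; rewrite mxE; case: ifP => [/andP [hl hm]|_]; last by rewrite hQ.
  rewrite hQ /Km hvv.
  set vc := \col_l v l.
  set e := @er n i0 C.
  set W := A *m vc.
  have hW : forall j, j \in I -> W j 0 = 0.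
    move=> j hj; rewrite /W mxE -[RHS](hAv j hj); apply: eq_bigr => k _; by rewrite mxE.
  have hvA : vc^T *m A = W^T by rewrite /W trmx_mul hA.
  have hvW : vc^T *m W = 0.
    apply/matrixP => i j; rewrite (ord1 i) (ord1 j) [LHS]mxE [RHS]mxE big1 // => k _.
    case: (boolP (k \in I)) => hk; first by rewrite hW // mulr0.
    by rewrite !mxE hvI // mul0r.
  have -> : (1%:M - vc *m e)^T *m A *m (1%:M - vc *m e) = A - W *m e - e^T *m W^T.
    have hT : (1%:M - vc *m e)^T = 1%:M - e^T *m vc^T.
      by apply/matrixP => i j; rewrite !mxE eq_sym; congr (_ - _); apply: eq_bigr => k _; rewrite !mxE mulrC.
    have hWv : W^T *m vc = 0.
      by rewrite -[vc]trmxK -trmx_mul hvW; apply/matrixP => i j; rewrite !mxE.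
    rewrite hT mulmxBl mul1mx !mulmxBr !mulmx1.
    rewrite -[e^T *m vc^T *m A]mulmxA hvA !mulmxA mulmxBl -/W.
    rewrite -[e^T *m W^T *m vc]mulmxA hWv mulmx0 subr0 addrAC //.
  have h1 : (W *m e) l m = 0 by rewrite mxE big_ord1 hW // mul0r.
  have h2 : (e^T *m W^T) l m = 0 by rewrite mxE big_ord1 [W^T _ _]mxE hW // mulr0.
  have E : forall P Q : 'M[C]_n, (P - Q) l m = P l m - Q l m by move=> P Q; rewrite !mxE.
  by rewrite !E h1 h2 !subr0.
have := param_zero hi0 hp x; by rewrite hPhi.
Qed.
End Main.

Unset Implicit Arguments.
Theorem mainTheorem16 (C : numClosedFieldType) (n : nat) (hn : (0 < n)%N)
  (A : 'M[C]_n) :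
  zariski_closure (@copos_boundary C n) A <->
  (A^T = A /\
   \prod_(I : {set 'I_n} | I != set0) \det (principal I A) = 0).
Proof.
split; first exact: fwd.
by case; apply: bwd.
Qed.
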